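(* Let $n\ge2$, let $u$ be a polar $n$-complex number, and define $\cos u=\sum_{j\ge0}(-1)^ju^{2j}/(2j)!$ and $\sin u=\sum_{j\ge0}(-1)^ju^{2j+1}/(2j+1)!$. Then for even $n$ $$\cos u=e_+\cos v_++e_-\cos v_-+\sum_{k=1}^{n/2-1}\big(e_k\cos v_k\cosh\tilde v_k-\tilde e_k\sin v_k\sinh\tilde v_k\big),$$ $$\sin u=e_+\sin v_++e_-\sin v_-+\sum_{k=1}^{n/2-1}\big(e_k\sin v_k\cosh\tilde v_k+\tilde e_k\cos v_k\sinh\tilde v_k\big),$$ and for odd $n$ the same formulas hold with the $e_-$ terms omitted and the sums running over $k=1,\dots,(n-1)/2$.
   Context: Polar $n$-complex numbers: $u=x_0+h_1x_1+\cdots+h_{n-1}x_{n-1}$, $x_j\in\mathbb{R}$, $h_0=1$, componentwise addition, bilinear multiplication $h_jh_k=h_{(j+k)\bmod n}$. Canonical variables: $v_+=\sum_px_p$; for even $n$, $v_-=\sum_p(-1)^px_p$; $v_k=\sum_px_p\cos(2\pi kp/n)$, $\tilde v_k=\sum_px_p\sin(2\pi kp/n)$ for $k=1,\dots,\lfloor(n-1)/2\rfloor$. Canonical base: $e_+=\frac1n\sum_ph_p$, $e_-=\frac1n\sum_p(-1)^ph_p$ (even $n$), $e_k=\frac2n\sum_p\cos(2\pi kp/n)h_p$, $\tilde e_k=\frac2n\sum_p\sin(2\pi kp/n)h_p$. *)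

(* Defs.v *)
From mathcomp Require Import all_boot all_order all_algebra.
From mathcomp Require Import all_classical all_reals all_analysis.
Set Implicit Arguments. Unset Strict Implicit. Unset Printing Implicit Defensive.
Import Order.TTheory GRing.Theory Num.Theory.
Import numFieldNormedType.Exports.
Local Open Scope classical_set_scope.
Local Open Scope ring_scope.

(* A polar n-complex number u = x_0 h_0 + ... + x_{n-1} h_{n-1} is represented
   by its coordinate function 'I_n -> R. *)
Definition pnc (R : realType) (n : nat) := 'I_n -> R.

Definition pone (R : realType) (n : nat) : pnc R n :=
  fun p => if val p == 0%N then 1 else 0.

(* bilinear multiplication with h_j h_k = h_{(j+k) mod n} *)
Definition pmul (R : realType) (n : nat) (u w : pnc R n) : pnc R n :=
  fun m => \sum_(j < n) \sum_(k < n)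
             (if ((j + k) %% n == val m)%N then u j * w k else 0).

Definition ppow (R : realType) (n : nat) (u : pnc R n) (k : nat) : pnc R n :=
  iter k (pmul u) (@pone R n).

Definition pcos_term (R : realType) (n : nat) (u : pnc R n) (j : nat) : pnc R n :=
  fun p => (-1) ^+ j / ((2 * j)`!)%:R * ppow u (2 * j) p.
Definition psin_term (R : realType) (n : nat) (u : pnc R n) (j : nat) : pnc R n :=
  fun p => (-1) ^+ j / ((2 * j).+1`!)%:R * ppow u (2 * j).+1 p.

(* "the series sum_j a_j converges in the n-complex numbers to l"
   (finite dimensional: componentwise convergence of the partial sums) *)
Definition psums_to (R : realType) (n : nat) (a : nat -> pnc R n) (l : pnc R n) :=
  forall p : 'I_n, (fun N => \sum_(0 <= j < N) a j p) @ \oo --> l p.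

Definition cosh (R : realType) (x : R) : R := (expR x + expR (- x)) / 2.
Definition sinh (R : realType) (x : R) : R := (expR x - expR (- x)) / 2.

Definition vplus (R : realType) (n : nat) (u : pnc R n) : R := \sum_(p < n) u p.
Definition vminus (R : realType) (n : nat) (u : pnc R n) : R :=
  \sum_(p < n) (-1) ^+ p * u p.
Definition vk (R : realType) (n : nat) (u : pnc R n) (k : nat) : R :=
  \sum_(p < n) u p * cos (2 * pi * k%:R * p%:R / n%:R).
Definition vtk (R : realType) (n : nat) (u : pnc R n) (k : nat) : R :=
  \sum_(p < n) u p * sin (2 * pi * k%:R * p%:R / n%:R).

Definition eplus (R : realType) (n : nat) : pnc R n := fun p => 1 / n%:R.
Definition eminus (R : realType) (n : nat) : pnc R n := fun p => (-1) ^+ p / n%:R.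
Definition ek (R : realType) (n : nat) (k : nat) : pnc R n :=
  fun p => 2 / n%:R * cos (2 * pi * k%:R * p%:R / n%:R).
Definition etk (R : realType) (n : nat) (k : nat) : pnc R n :=
  fun p => 2 / n%:R * sin (2 * pi * k%:R * p%:R / n%:R).

Arguments pone R n : clear implicits.
Arguments eplus R n : clear implicits.
Arguments eminus R n : clear implicits.
Arguments ek R n k : clear implicits.
Arguments etk R n k : clear implicits.

(* Main.v *)
Require Import Defs.
From mathcomp Require Import all_boot all_order all_algebra.
From mathcomp Require Import all_classical all_reals all_analysis.
From mathcomp Require Import complex.
From mathcomp Require Import zify ring lra.
Import Order.TTheory GRing.Theory Num.Theory.
Import numFieldNormedType.Exports.
Local Open Scope classical_set_scope.
Local Open Scope ring_scope.

Section Cauchy.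
Variable R : realType.
Implicit Types x y : nat -> R.

Definition cprod x y (N : nat) : R :=
  \sum_(0 <= m < N) \sum_(0 <= k < m.+1) x k * y (m - k)%N.

Lemma cprodE x y N :
  cprod x y N = \sum_(0 <= k < N) x k * \sum_(0 <= l < N - k) y l.
Proof.
elim: N => [|N IH]; first by rewrite /cprod !big_geq.
rewrite /cprod big_nat_recr //= -/(cprod x y N) IH.
rewrite [in RHS]big_nat_recr //= subSnn big_nat1.
rewrite big_nat_recr //= subnn addrA; congr (_ + _).
rewrite -big_split /=.
apply: eq_big_nat => k /andP[_ kN].
by rewrite subSn ?(ltnW kN) // big_nat_recr //= mulrDr.
Qed.

Lemma cprod_diff x y N : series x N * series y N - cprod x y N =
  \sum_(0 <= k < N) x k * \sum_(N - k <= l < N) y l.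
Proof.
rewrite cprodE /series /= mulr_suml -sumrB; apply: eq_big_nat => k /andP[_ kN].
rewrite -mulrBr; congr (_ * _).
by rewrite [X in X - _](big_cat_nat (leq0n (N - k)) (leq_subr k N)) /= addrAC subrr add0r.
Qed.

Lemma series_mono x a b : (forall k, 0 <= x k) -> (a <= b)%N -> series x a <= series x b.
Proof.
move=> x0 ab; rewrite /series /= (big_cat_nat (leq0n a) ab) /= lerDl.
by apply: sumr_ge0 => i _.
Qed.

Lemma cprod_abs_bound x y N :
  `|series x N * series y N - cprod x y N| <=
  series (fun k => `|x k|) N * series (fun k => `|y k|) N
   - cprod (fun k => `|x k|) (fun k => `|y k|) N.
Proof.
rewrite !cprod_diff; apply: le_trans (ler_norm_sum _ _ _) _.
apply: ler_sum_nat => k _; rewrite normrM ler_wpM2l //.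
exact: ler_norm_sum.
Qed.

Lemma cprod_lower x y N : (forall k, 0 <= x k) -> (forall k, 0 <= y k) ->
  series x (N %/ 2)%N * series y (N %/ 2)%N <= cprod x y N.
Proof.
move=> x0 y0; rewrite cprodE /series /= mulr_suml.
have hN : (N %/ 2 <= N)%N by rewrite leq_div.
rewrite (big_cat_nat (leq0n _) hN) /= -[X in X <= _]addr0.
apply: lerD; last by apply: sumr_ge0 => i _; apply: mulr_ge0 => //; apply: sumr_ge0.
apply: ler_sum_nat => k /andP[_ kN]; apply: ler_wpM2l => //.
have h : (N %/ 2 <= N - k)%N by lia.
by have := @series_mono y _ _ y0 h; rewrite /series.
Qed.

Lemma cauchy_prod_cvg x y (X Y : R) :
  series x @ \oo --> X -> series y @ \oo --> Y ->
  cvgn (series (fun k => `|x k|)) -> cvgn (series (fun k => `|y k|)) ->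
  cprod x y @ \oo --> X * Y.
Proof.
move=> hx hy cax cay.
set ax := (fun k => `|x k|) in cax *; set ay := (fun k => `|y k|) in cay *.
set g := fun N => series ax N * series ay N
   - series ax (N %/ 2)%N * series ay (N %/ 2)%N.
have gcv : g @ \oo --> 0.
  rewrite -(subrr (limn (series ax) * limn (series ay))).
  have hP : (fun N => series ax N * series ay N) @ \oo -->
      limn (series ax) * limn (series ay) by apply: cvgM.
  apply: cvgB => //.
  by have := cvg_comp _ _ (@cvg_divnr 2 isT) hP.
have dcv : (fun N => series x N * series y N - cprod x y N) @ \oo --> 0.
  apply: (@squeeze_cvgr _ _ _ _ (fun N => - g N) g).
  - near=> N; rewrite -ler_norml; apply: le_trans (cprod_abs_bound _ _ _) _.
    by rewrite /g lerD2l lerN2; apply: cprod_lower => k; exact: normr_ge0.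
  - by have := cvgN gcv; rewrite oppr0; apply; apply: filter_not_empty || exact: _.
  - exact: gcv.
have : (fun N => series x N * series y N - (series x N * series y N - cprod x y N))
   @ \oo --> X * Y - 0.
  by apply: cvgB => //; apply: cvgM.
rewrite subr0; apply: cvg_trans; apply: near_eq_cvg; near=> N.
by rewrite opprB addrCA subrr addr0.
Unshelve. all: end_near.
Qed.
End Cauchy.
Arguments cprod {R}.

Local Open Scope complex_scope.
Notation cRe := (@complex.Re _).
Notation cIm := (@complex.Im _).
Section Cx.
Variable R : realType.
Implicit Types x y z : R[i].

Lemma cE x y : cRe x = cRe y -> cIm x = cIm y -> x = y.
Proof. by case: x => a b; case: y => c d /= -> ->. Qed.
Lemma ReM x y : cRe (x * y) = cRe x * cRe y - cIm x * cIm y.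
Proof. by case: x => a b; case: y. Qed.
Lemma ImM x y : cIm (x * y) = cRe x * cIm y + cIm x * cRe y.
Proof. by case: x => a b; case: y. Qed.
Lemma ReD x y : cRe (x + y) = cRe x + cRe y.
Proof. by case: x => a b; case: y. Qed.
Lemma ImD x y : cIm (x + y) = cIm x + cIm y.
Proof. by case: x => a b; case: y. Qed.
Lemma ReN x : cRe (- x) = - cRe x.
Proof. by case: x. Qed.
Lemma ImN x : cIm (- x) = - cIm x.
Proof. by case: x. Qed.
Lemma ReB x y : cRe (x - y) = cRe x - cRe y.
Proof. by rewrite ReD ReN. Qed.
Lemma ImB x y : cIm (x - y) = cIm x - cIm y.
Proof. by rewrite ImD ImN. Qed.
Lemma Re_real (r : R) : cRe r%:C = r. Proof. by []. Qed.
Lemma Im_real (r : R) : cIm r%:C = 0. Proof. by []. Qed.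
Lemma Re0 : cRe (0 : R[i]) = 0. Proof. by []. Qed.
Lemma Im0 : cIm (0 : R[i]) = 0. Proof. by []. Qed.
Lemma Re1 : cRe (1 : R[i]) = 1. Proof. by []. Qed.
Lemma Im1 : cIm (1 : R[i]) = 0. Proof. by []. Qed.
Lemma ReC (a b : R) : cRe (a +i* b) = a. Proof. by []. Qed.
Lemma ImC (a b : R) : cIm (a +i* b) = b. Proof. by []. Qed.

Lemma Re_sum (I : Type) (r : seq I) (P : pred I) (F : I -> R[i]) :
  cRe (\sum_(i <- r | P i) F i) = \sum_(i <- r | P i) cRe (F i).
Proof. by apply: (big_morph (@complex.Re R)) => // u v; rewrite ReD. Qed.
Lemma Im_sum (I : Type) (r : seq I) (P : pred I) (F : I -> R[i]) :
  cIm (\sum_(i <- r | P i) F i) = \sum_(i <- r | P i) cIm (F i).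
Proof. by apply: (big_morph (@complex.Im R)) => // u v; rewrite ImD. Qed.

Lemma ReMr (r : R) x : cRe (r%:C * x) = r * cRe x.
Proof. by rewrite ReM Re_real Im_real mul0r subr0. Qed.
Lemma ImMr (r : R) x : cIm (r%:C * x) = r * cIm x.
Proof. by rewrite ImM Re_real Im_real mul0r addr0. Qed.

Lemma realM (r s : R) : (r * s)%:C = r%:C * s%:C :> R[i].
Proof. by apply: cE; rewrite ?ReM ?ImM /= ?mulr0 ?mul0r ?subr0 ?addr0. Qed.
Lemma realX (r : R) k : (r ^+ k)%:C = r%:C ^+ k :> R[i].
Proof. by elim: k => [|k IH] //; rewrite !exprS realM IH. Qed.
Lemma realD (r s : R) : (r + s)%:C = r%:C + s%:C :> R[i].
Proof. by apply: cE; rewrite ?ReD ?ImD /= ?addr0. Qed.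
Lemma realN (r : R) : (- r)%:C = - r%:C :> R[i].
Proof. by apply: cE; rewrite ?ReN ?ImN /= ?oppr0. Qed.
Lemma real_nat k : (k%:R : R)%:C = k%:R :> R[i].
Proof. by elim: k => [|k IH] //; rewrite !mulrS realD IH. Qed.

Lemma ipow_even (b : R) q : (0 +i* b) ^+ q.*2 = ((-1) ^+ q * b ^+ q.*2)%:C.
Proof.
rewrite -muln2 mulnC !exprM -exprNn realX; congr (_ ^+ q).
by apply: cE; rewrite ?ReM ?ImM /= ?expr2; ring.
Qed.

Lemma ipow_coeff (b : R) l :
  ((l`!%:R)^-1)%:C * (0 +i* b) ^+ l = (cos_coeff b l) +i* (sin_coeff b l).
Proof.
rewrite -(odd_double_half l); case: (odd l); rewrite /= ?add1n ?add0n;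
  set q := l./2.
- rewrite exprS ipow_even; apply: cE;
    rewrite ?(ReMr, ImMr, ReM, ImM) /= /cos_coeff /sin_coeff /=
    ?odd_double /= ?uphalf_double ?doubleK ?exprS -?exprnP; ring.
- rewrite (ipow_even b q); apply: cE;
    rewrite ?(ReMr, ImMr, ReM, ImM) /= /cos_coeff /sin_coeff /=
    ?odd_double /= ?uphalf_double ?doubleK -?exprnP; ring.
Qed.

Lemma cexp_term (a b : R) m : ((m`!%:R)^-1)%:C * (a +i* b) ^+ m =
  \sum_(0 <= k < m.+1)
     (exp_coeff a k)%:C * ((cos_coeff b (m - k)%N) +i* (sin_coeff b (m - k)%N)).
Proof.
have -> : a +i* b = (0 +i* b) + a%:C by apply: cE; rewrite /= ?addr0 ?add0r.
rewrite exprDn mulr_sumr big_mkord; apply: eq_bigr => -[k /=]; rewrite ltnS => hk _.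
rewrite -ipow_coeff.
have hR : a ^+ k / k`!%:R * ((m - k)%N`!%:R)^-1 = (m`!%:R)^-1 * a ^+ k * ('C(m, k))%:R.
  have h1 : (k`!%:R : R) != 0 by rewrite pnatr_eq0 -lt0n fact_gt0.
  have h2 : ((m - k)%N`!%:R : R) != 0 by rewrite pnatr_eq0 -lt0n fact_gt0.
  have h3 : (('C(m, k))%:R : R) != 0 by rewrite pnatr_eq0 -lt0n bin_gt0.
  rewrite -(bin_fact hk) !natrM; field.
  by rewrite h3 h1 h2.
rewrite /exp_coeff /= mulrA -realM hR !realM realX -mulr_natr real_nat; ring.
Qed.

Definition cexpN (z : R[i]) N := \sum_(0 <= m < N) ((m`!%:R)^-1)%:C * z ^+ m.

Lemma Re_cexpN (a b : R) N :
  cRe (cexpN (a +i* b) N) = cprod (exp_coeff a) (cos_coeff b) N.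
Proof.
rewrite /cexpN /cprod Re_sum; apply: eq_bigr => m _.
by rewrite cexp_term Re_sum; apply: eq_bigr => k _; rewrite ReMr.
Qed.

Lemma Im_cexpN (a b : R) N :
  cIm (cexpN (a +i* b) N) = cprod (exp_coeff a) (sin_coeff b) N.
Proof.
rewrite /cexpN /cprod Im_sum; apply: eq_bigr => m _.
by rewrite cexp_term Im_sum; apply: eq_bigr => k _; rewrite ImMr.
Qed.
End Cx.
Arguments cexpN {R}.

Section CxCvg.
Variable R : realType.

Lemma cvg_exp_series (a : R) : series (exp_coeff a) @ \oo --> expR a.
Proof. exact: is_cvg_series_exp_coeff. Qed.
Lemma cvg_cos_series (b : R) : series (cos_coeff b) @ \oo --> cos b.
Proof. by rewrite unlock; exact: is_cvg_series_cos_coeff. Qed.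
Lemma cvg_sin_series (b : R) : series (sin_coeff b) @ \oo --> sin b.
Proof. by rewrite unlock; exact: is_cvg_series_sin_coeff. Qed.

Lemma abs_exp_series (a : R) : cvgn (series (fun k => `|exp_coeff a k|)).
Proof.
have := is_cvg_series_exp_coeff `|a|.
by rewrite -normed_series_exp_coeff.
Qed.
Lemma abs_cos_series (b : R) : cvgn (series (fun k => `|cos_coeff b k|)).
Proof.
apply: series_le_cvg; last exact: (is_cvg_series_exp_coeff `|b|).
- by move=> n; rewrite normr_ge0.
- by move=> n; rewrite /exp_coeff /= divr_ge0.
- move=> n /=; rewrite /exp_coeff /cos_coeff /=.
  rewrite !normrM normfV !normr_nat !normrX normrN normr1 expr1n mulr1.
  by case: odd; [rewrite !mul0r | rewrite mul1r].
Qed.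
Lemma abs_sin_series (b : R) : cvgn (series (fun k => `|sin_coeff b k|)).
Proof.
apply: series_le_cvg; last exact: (is_cvg_series_exp_coeff `|b|).
- by move=> n; rewrite normr_ge0.
- by move=> n; rewrite /exp_coeff /= divr_ge0.
- move=> n /=; rewrite /exp_coeff /sin_coeff /=.
  rewrite !normrM normfV !normr_nat !normrX normrN normr1 expr1n mulr1.
  by case: odd; [rewrite mul1r | rewrite !mul0r].
Qed.

Lemma Re_cexp_cvg (a b : R) :
  (fun N => cRe (cexpN (a +i* b) N)) @ \oo --> expR a * cos b.
Proof.
under eq_fun do rewrite Re_cexpN.
apply: cauchy_prod_cvg; [exact: cvg_exp_series | exact: cvg_cos_series
  | exact: abs_exp_series | exact: abs_cos_series].
Qed.
Lemma Im_cexp_cvg (a b : R) :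
  (fun N => cIm (cexpN (a +i* b) N)) @ \oo --> expR a * sin b.
Proof.
under eq_fun do rewrite Im_cexpN.
apply: cauchy_prod_cvg; [exact: cvg_exp_series | exact: cvg_sin_series
  | exact: abs_exp_series | exact: abs_sin_series].
Qed.
End CxCvg.

Section CosSinC.
Variable R : realType.
Implicit Types z w : R[i].

Definition ccosN z N := \sum_(0 <= j < N) (((-1) ^+ j / ((2 * j)`!)%:R))%:C * z ^+ (2 * j).
Definition csinN z N := \sum_(0 <= j < N) (((-1) ^+ j / ((2 * j).+1`!)%:R))%:C * z ^+ (2 * j).+1.

Definition cterm w m : R[i] := ((m`!%:R)^-1)%:C * w ^+ m.

Lemma cexpN_pair w N : cexpN w (2 * N) =
  \sum_(0 <= j < N) (cterm w (2 * j) + cterm w (2 * j).+1).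
Proof.
elim: N => [|N IH]; first by rewrite muln0 /cexpN !big_geq.
have -> : (2 * N.+1 = (2 * N).+2)%N by rewrite mulnS addnC addn2.
rewrite /cexpN !big_nat_recr //= -/(cexpN w (2 * N)) IH.
by rewrite addrA.
Qed.

Lemma sqrN_pow w j : (- w) ^+ (2 * j) = w ^+ (2 * j).
Proof. by rewrite !exprM sqrrN. Qed.

Lemma iz_pow z j : ('i%C * z) ^+ (2 * j) = (-1) ^+ j * z ^+ (2 * j).
Proof. by rewrite exprMn exprM sqr_i. Qed.

Lemma ccosN_eq z N :
  2%:R * ccosN z N = cexpN ('i%C * z) (2 * N) + cexpN (- ('i%C * z)) (2 * N).
Proof.
rewrite !cexpN_pair -big_split /ccosN mulr_sumr; apply: eq_bigr => j _.
rewrite /cterm exprS [(- _) ^+ (2 * j).+1]exprS !sqrN_pow iz_pow.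
rewrite realM realX realN /= (_ : (1 : R)%:C = 1) //. 
rewrite -[X in _ = X]addrA [X in _ = _ + X]addrC !addrA.
ring.
Qed.

Lemma csinN_eq z N :
  (2%:R * 'i%C) * csinN z N = cexpN ('i%C * z) (2 * N) - cexpN (- ('i%C * z)) (2 * N).
Proof.
rewrite !cexpN_pair -sumrB /csinN mulr_sumr; apply: eq_bigr => j _.
rewrite /cterm !exprS !sqrN_pow iz_pow.
rewrite realM realX realN /= (_ : (1 : R)%:C = 1) //.
ring.
Qed.
End CosSinC.
Arguments ccosN {R}.
Arguments csinN {R}.

Section CosSinCvg.
Variable R : realType.

Lemma cvg2 (f : nat -> R) (l : R) : f @ \oo --> l -> (fun N => f (2 * N)%N) @ \oo --> l.
Proof. by move=> h; have := cvg_comp _ _ (@cvg_mulnl 2 isT) h. Qed.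

Lemma comb_cvg (f g : nat -> R) (A B c1 c2 k : R) : f @ \oo --> A -> g @ \oo --> B ->
  (fun N => (c1 * f (2 * N)%N + c2 * g (2 * N)%N) * k) @ \oo --> (c1 * A + c2 * B) * k.
Proof.
move=> hf hg; apply: cvgMr_tmp; apply: cvgD; apply: cvgMl_tmp; exact: cvg2.
Qed.

Lemma iz_eq (a b : R) : 'i%C * (a +i* b) = (- b) +i* a.
Proof. by apply: cE; rewrite ?ReM ?ImM /=; ring. Qed.
Lemma miz_eq (a b : R) : - ('i%C * (a +i* b)) = b +i* (- a).
Proof. by apply: cE; rewrite ?ReN ?ImN ?ReM ?ImM /=; ring. Qed.
Lemma two_real : (2%:R : R[i]) = (2%:R : R)%:C.
Proof. by rewrite real_nat. Qed.

Lemma ccos_re_cvg (a b : R) :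
  (fun N => cRe (ccosN (a +i* b) N)) @ \oo --> cos a * cosh b.
Proof.
have e N : cRe (ccosN (a +i* b) N) =
   (1 * cRe (cexpN ((- b) +i* a) (2 * N)) + 1 * cRe (cexpN (b +i* (- a)) (2 * N))) * 2^-1.
  have := congr1 cRe (@ccosN_eq _ (a +i* b) N).
  rewrite two_real ReMr ReD miz_eq iz_eq !mul1r => <-; by field.
rewrite (funext e).
have -> : cos a * cosh b = (1 * (expR (- b) * cos a) + 1 * (expR b * cos (- a))) * 2^-1.
  by rewrite cosN /cosh; ring.
by apply: (@comb_cvg (fun M => cRe (cexpN ((- b) +i* a) M)) (fun M => cRe (cexpN (b +i* (- a)) M))); apply: Re_cexp_cvg.
Qed.

Lemma ccos_im_cvg (a b : R) :
  (fun N => cIm (ccosN (a +i* b) N)) @ \oo --> - (sin a * sinh b).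
Proof.
have e N : cIm (ccosN (a +i* b) N) =
   (1 * cIm (cexpN ((- b) +i* a) (2 * N)) + 1 * cIm (cexpN (b +i* (- a)) (2 * N))) * 2^-1.
  have := congr1 cIm (@ccosN_eq _ (a +i* b) N).
  rewrite two_real ImMr ImD miz_eq iz_eq !mul1r => <-; by field.
rewrite (funext e).
have -> : - (sin a * sinh b) = (1 * (expR (- b) * sin a) + 1 * (expR b * sin (- a))) * 2^-1.
  by rewrite sinN /sinh; ring.
by apply: (@comb_cvg (fun M => cIm (cexpN ((- b) +i* a) M)) (fun M => cIm (cexpN (b +i* (- a)) M))); apply: Im_cexp_cvg.
Qed.

Lemma csin_re_cvg (a b : R) :
  (fun N => cRe (csinN (a +i* b) N)) @ \oo --> sin a * cosh b.
Proof.
have e N : cRe (csinN (a +i* b) N) =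
   (1 * cIm (cexpN ((- b) +i* a) (2 * N)) + (-1) * cIm (cexpN (b +i* (- a)) (2 * N))) * 2^-1.
  have := congr1 cIm (@csinN_eq _ (a +i* b) N).
  rewrite two_real ImM ImB miz_eq iz_eq /= => h; rewrite mul1r mulN1r -h; by field.
rewrite (funext e).
have -> : sin a * cosh b = (1 * (expR (- b) * sin a) + (-1) * (expR b * sin (- a))) * 2^-1.
  by rewrite sinN /cosh; ring.
by apply: (@comb_cvg (fun M => cIm (cexpN ((- b) +i* a) M)) (fun M => cIm (cexpN (b +i* (- a)) M))); apply: Im_cexp_cvg.
Qed.

Lemma csin_im_cvg (a b : R) :
  (fun N => cIm (csinN (a +i* b) N)) @ \oo --> cos a * sinh b.
Proof.
have e N : cIm (csinN (a +i* b) N) =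
   ((-1) * cRe (cexpN ((- b) +i* a) (2 * N)) + 1 * cRe (cexpN (b +i* (- a)) (2 * N))) * 2^-1.
  have := congr1 cRe (@csinN_eq _ (a +i* b) N).
  rewrite two_real ReM ReB miz_eq iz_eq /= => h; rewrite mul1r mulN1r addrC -opprB -h; by field.
rewrite (funext e).
have -> : cos a * sinh b = ((-1) * (expR (- b) * cos a) + 1 * (expR b * cos (- a))) * 2^-1.
  by rewrite cosN /sinh; ring.
by apply: (@comb_cvg (fun M => cRe (cexpN ((- b) +i* a) M)) (fun M => cRe (cexpN (b +i* (- a)) M))); apply: Re_cexp_cvg.
Qed.
End CosSinCvg.

Section Roots.
Variable R : realType.

Definition ang (n m : nat) : R := 2 * pi * m%:R / n%:R.
Definition cw (n m : nat) : R[i] := cos (ang n m) +i* sin (ang n m).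

Lemma cw_pow n m : cw n m = cw n 1 ^+ m.
Proof.
elim: m => [|m IH].
  by rewrite expr0 /cw /ang mulr0 mul0r cos0 sin0.
rewrite exprS -IH /cw.
have -> : ang n m.+1 = ang n 1 + ang n m by rewrite /ang -addn1 natrD; ring.
by apply: cE; rewrite ?ReM ?ImM /= ?cosD ?sinD; ring.
Qed.

Lemma cw_n n : (0 < n)%N -> cw n 1 ^+ n = 1.
Proof.
move=> n0; rewrite -cw_pow /cw /ang.
have -> : 2 * pi * n%:R / n%:R = pi *+ 2 :> R.
  by rewrite mulfK ?pnatr_eq0 -?lt0n // mulr_natl.
by rewrite cos2pi sin2pi.
Qed.

Lemma pow_mod (z : R[i]) n a : z ^+ n = 1 -> z ^+ (a %% n) = z ^+ a.
Proof. by move=> h; rewrite {2}(divn_eq a n) exprD mulnC exprM h expr1n mul1r. Qed.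

Lemma cw_defs (n k p : nat) :
  cos (2 * pi * k%:R * p%:R / n%:R) +i* sin (2 * pi * k%:R * p%:R / n%:R)
  = cw n 1 ^+ (k * p).
Proof. by rewrite -cw_pow /cw /ang natrM mulrA. Qed.

Lemma cs_one (t : R) : 0 < t < pi *+ 2 -> cos t = 1 -> sin t = 0 -> False.
Proof.
move=> /andP[t0 t2] c1 s0.
have [tp|tp|tp] := ltgtP t pi.
- by have := @sin_gt0_pi _ t; rewrite t0 tp s0 ltxx => /(_ isT).
- have h : 0 < t - pi < pi by rewrite subr_gt0 tp /= ltrBlDr -mulr2n.
  have := sin_gt0_pi h.
  have -> : sin (t - pi) = - sin t.
    by rewrite -[in RHS](subrK pi t) sinDpi opprK.
  by rewrite s0 oppr0 ltxx.
- move: c1; rewrite tp cospi => /eqP; rewrite -subr_eq0 -opprD oppr_eq0.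
  by rewrite (_ : 1 + 1 = 2%:R :> R) // pnatr_eq0.
Qed.
End Roots.

Section DFT.
Variable R : realType.

Definition wn n : R[i] := cw R n 1.
Definition phi {n} (x : pnc R n) (k : nat) : R[i] :=
  \sum_(p < n) (x p)%:C * wn n ^+ (k * p).

Lemma real_sum (I : Type) (r : seq I) (P : pred I) (F : I -> R) :
  (\sum_(i <- r | P i) F i)%:C = \sum_(i <- r | P i) (F i)%:C :> R[i].
Proof. by apply: (big_morph (real_complex R)) => // a b; rewrite realD. Qed.

Lemma cw_ne1 n r : (0 < r)%N -> (r < n)%N -> wn n ^+ r != 1.
Proof.
move=> r0 rn; apply/eqP; rewrite /wn -cw_pow => h.
have n0 : (0 < n)%N by apply: leq_ltn_trans rn.
apply: (@cs_one R (ang R n r)); last first.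
- by have := congr1 cIm h.
- by have := congr1 cRe h.
rewrite /ang; apply/andP; split.
  by rewrite divr_gt0 ?ltr0n // mulr_gt0 ?ltr0n // mulr_gt0 ?pi_gt0.
rewrite ltr_pdivrMr ?ltr0n // mulr2n.
have := @pi_gt0 R; have : (r%:R : R) < n%:R by rewrite ltr_nat.
nra.
Qed.

Lemma geo_root (z : R[i]) n : z ^+ n = 1 -> z != 1 -> \sum_(k < n) z ^+ k = 0.
Proof.
move=> zn z1; have := subrX1 z n; rewrite zn subrr => /esym/eqP.
by rewrite mulf_eq0 subr_eq0 (negbTE z1) /= => /eqP.
Qed.

Lemma conj_cw n a : (conjc (cw R n a)) * cw R n a = 1.
Proof.
apply: cE; rewrite ?ReM ?ImM /=; last by ring.
by rewrite -(cos2Dsin2 (ang R n a)); ring.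
Qed.

Lemma conj_inv (x y : R[i]) : conjc x * x = 1 -> x * y = 1 -> conjc x = y.
Proof. by move=> h1 h2; rewrite -[conjc x]mulr1 -h2 mulrA h1 mul1r. Qed.

Lemma conj_wpow n (a b : nat) : (0 < n)%N -> wn n ^+ (a + b) = 1 ->
  conjc (wn n ^+ a) = wn n ^+ b.
Proof.
move=> n0 h; apply: conj_inv; first by rewrite /wn -cw_pow conj_cw.
by rewrite -exprD.
Qed.

Lemma wn_n n : (0 < n)%N -> wn n ^+ n = 1.
Proof. exact: cw_n. Qed.

Lemma sum_pick n (i : 'I_n) (F : 'I_n -> R[i]) (X : R) :
  \sum_(m < n) (if (val i == val m)%N then X else 0)%:C * F m = X%:C * F i.
Proof.
rewrite (bigD1 i) //= eqxx big1 ?addr0 // => m /negbTE hm.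
by rewrite (_ : (val i == val m) = false) ?mul0r // eq_sym -hm.
Qed.

Lemma phi_pmul n (u v : pnc R n) k : (0 < n)%N ->
  phi (pmul u v) k = phi u k * phi v k.
Proof.
move=> n0; rewrite /phi /pmul mulr_suml.
under eq_bigr => m _ do rewrite real_sum mulr_suml.
rewrite exchange_big /=; apply: eq_bigr => j _.
under eq_bigr => m _ do rewrite real_sum mulr_suml.
rewrite exchange_big mulr_sumr /=; apply: eq_bigr => l _.
pose i := Ordinal (ltn_pmod (j + l) n0).
rewrite (@sum_pick n i (fun m : 'I_n => wn n ^+ (k * m))) /= realM.
have hw : (wn n ^+ k) ^+ n = 1 by rewrite -exprM mulnC exprM wn_n // expr1n.
rewrite exprM pow_mod // exprD -!exprM; ring.
Qed.

Lemma phi_pone n k : (0 < n)%N -> phi (pone R n) k = 1.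
Proof.
move=> n0; rewrite /phi (bigD1 (Ordinal n0)) //= big1 ?addr0.
  by rewrite /pone /= muln0 expr0 mulr1.
by move=> m hm; rewrite /pone; case: eqP => [h|_]; [case/eqP: hm; apply: val_inj|rewrite mul0r].
Qed.

Lemma phi_ppow n (u : pnc R n) m k : (0 < n)%N -> phi (ppow u m) k = phi u k ^+ m.
Proof.
move=> n0; elim: m => [|m IH]; first by rewrite expr0 phi_pone.
by rewrite /ppow iterS -/(ppow u m) phi_pmul // IH exprS.
Qed.

Lemma mod_pos n (q p : 'I_n) : q != p -> (0 < (q + (n - p)) %% n)%N.
Proof.
move=> qp; have qn := ltn_ord q; have pn := ltn_ord p.
have [qlp|pLq] := ltnP q p.
  by rewrite modn_small; lia.
have pq : (p < q)%N by rewrite ltn_neqAle eq_sym pLq andbT; apply: contra qp => /eqP h; apply/eqP/val_inj.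
rewrite (_ : (q + (n - p) = (q - p) + n)%N); last by lia.
by rewrite modnDr modn_small; lia.
Qed.

Lemma phi_inv n (x : pnc R n) (p : 'I_n) : (0 < n)%N ->
  \sum_(k < n) phi x k * conjc (wn n ^+ (k * p)) = (x p)%:C * n%:R.
Proof.
move=> n0.
have hc : forall k : 'I_n, conjc (wn n ^+ (k * p)) = wn n ^+ (k * (n - p)).
  move=> k; apply: conj_wpow => //.
  by rewrite -mulnDr subnKC ?(ltnW (ltn_ord p)) // mulnC exprM wn_n // expr1n.
under eq_bigr => k _ do rewrite hc /phi mulr_suml.
rewrite exchange_big /=.
have e : forall q : 'I_n, \sum_(k < n) (x q)%:C * wn n ^+ (k * q) * wn n ^+ (k * (n - p))
   = (x q)%:C * \sum_(k < n) (wn n ^+ (q + (n - p))) ^+ k.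
  move=> q; rewrite mulr_sumr; apply: eq_bigr => k _.
  by rewrite -mulrA -exprD -mulnDr mulnC exprM.
under eq_bigr => q _ do rewrite e.
rewrite (bigD1 p) //= [X in _ + X]big1 ?addr0.
  rewrite subnKC ?(ltnW (ltn_ord p)) // wn_n //.
  by under eq_bigr => k _ do rewrite expr1n; rewrite sumr_const card_ord.
move=> q qp; rewrite geo_root ?mulr0 //.
  by rewrite -exprM mulnC exprM wn_n // expr1n.
rewrite -(@pow_mod R _ n _ (wn_n n n0)) cw_ne1 //; first exact: mod_pos.
exact: ltn_pmod.
Qed.
End DFT.
Arguments phi {R n}.
Arguments wn {R}.

Section PSum.
Variable R : realType.

Definition Ssum {n} (u : pnc R n) (c : nat -> R) (d : nat -> nat) (k N : nat) : R[i] :=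
  \sum_(0 <= j < N) (c j)%:C * phi u k ^+ d j.

Lemma ppow_inv n (u : pnc R n) m (p : 'I_n) : (0 < n)%N ->
  ppow u m p = n%:R^-1 * \sum_(k < n)
     (cos (ang R n (k * p)) * cRe (phi u k ^+ m) + sin (ang R n (k * p)) * cIm (phi u k ^+ m)).
Proof.
move=> n0.
have := congr1 cRe (@phi_inv R n (ppow u m) p n0).
rewrite -real_nat -realM Re_real Re_sum => h.
have nz : (n%:R : R) != 0 by rewrite pnatr_eq0 -lt0n.
rewrite -[ppow u m p](mulfK nz) -h mulrC; congr (_ * _).
apply: eq_bigr => k _; rewrite phi_ppow // ReM.
rewrite /wn -cw_pow /cw /=; ring.
Qed.

Lemma psum_eq n (u : pnc R n) c d (p : 'I_n) N : (0 < n)%N ->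
  \sum_(0 <= j < N) c j * ppow u (d j) p =
  n%:R^-1 * \sum_(k < n) (cos (ang R n (k * p)) * cRe (Ssum u c d k N)
                        + sin (ang R n (k * p)) * cIm (Ssum u c d k N)).
Proof.
move=> n0.
under eq_bigr => j _ do rewrite ppow_inv // mulrCA mulr_sumr.
rewrite -mulr_sumr exchange_big /=; congr (_ * _); apply: eq_bigr => k _.
rewrite /Ssum Re_sum Im_sum !mulr_sumr -big_split /=; apply: eq_bigr => j _.
by rewrite ReMr ImMr; ring.
Qed.

Lemma cvg_sumf (I : Type) (r : seq I) (P : pred I) (f : I -> nat -> R) (l : I -> R) :
  (forall i, f i @ \oo --> l i) ->
  (fun N => \sum_(i <- r | P i) f i N) @ \oo --> \sum_(i <- r | P i) l i.
Proof.
move=> h; elim: r => [|a r IH].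
  rewrite big_nil; under eq_fun do rewrite big_nil; exact: cvg_cst.
rewrite big_cons; under eq_fun do rewrite big_cons.
by case: (P a) => //; apply: cvgD.
Qed.
End PSum.

Section Pair.
Variable R : realType.

Lemma sym_tail (G : nat -> R) n h : (h < n)%N ->
  (forall k, (0 < k < n)%N -> G (n - k)%N = G k) ->
  \sum_(h.+1 <= k < n) G k = \sum_(1 <= k < n - h) G k.
Proof.
move=> hn sym.
rewrite (@eq_big_nat _ _ _ h.+1 n _ (fun i => G (n - i)%N)); last first.
  by move=> i /andP[hi iN]; rewrite sym //; apply/andP; split; lia.
rewrite big_nat_rev /=.
rewrite (@eq_big_nat _ _ _ h.+1 n _ (fun i => G (i - h)%N)); last first.
  by move=> i /andP[hi iN]; congr G; lia.
rewrite (_ : h.+1 = 1 + h)%N // big_addn.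
by apply: eq_big_nat => i _; rewrite addnK.
Qed.

Lemma pair_even (G : nat -> R) h : (0 < h)%N ->
  (forall k, (0 < k < h.*2)%N -> G (h.*2 - k)%N = G k) ->
  \sum_(k < h.*2) G k = G 0%N + G h + 2 * \sum_(1 <= k < h) G k.
Proof.
move=> h0 sym.
rewrite -(big_mkord xpredT) -addnn in sym *.
rewrite big_ltn; last by lia.
rewrite (big_cat_nat (n := h)) //=; last by lia.
rewrite [\sum_(h <= i < h + h) _]big_ltn; last by lia.
have -> := @sym_tail G (h + h) h ltac:(lia) sym.
rewrite (_ : h + h - h = h)%N; last by lia.
rewrite mulr2n mulrDl mul1r. ring.
Qed.

Lemma pair_odd (G : nat -> R) h :
  (forall k, (0 < k < h.*2.+1)%N -> G (h.*2.+1 - k)%N = G k) ->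
  \sum_(k < h.*2.+1) G k = G 0%N + 2 * \sum_(1 <= k < h.+1) G k.
Proof.
move=> sym.
rewrite -(big_mkord xpredT) -addnn in sym *.
rewrite big_ltn //.
rewrite (big_cat_nat (n := h.+1)) //=; last by lia.
have -> := @sym_tail G (h + h).+1 h ltac:(lia) sym.
rewrite (_ : (h + h).+1 - h = h.+1)%N; last by lia.
rewrite mulr2n mulrDl mul1r. ring.
Qed.
End Pair.

Section Final.
Variable R : realType.

Definition tt' (n k p : nat) : R := 2 * pi * k%:R * p%:R / n%:R.

Lemma ang_defs n k p : ang R n (k * p) = tt' n k p.
Proof. by rewrite /ang /tt' natrM mulrA. Qed.

Lemma t_shift n k p : (0 < n)%N -> (k <= n)%N ->
  tt' n (n - k) p = - tt' n k p + (pi *+ 2) *+ p.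
Proof.
move=> n0 kn; rewrite /tt' natrB // -[(pi *+ 2) *+ p]mulr_natr -[pi *+ 2]mulr_natr.
have nz : (n%:R : R) != 0 by rewrite pnatr_eq0 -lt0n.
by field.
Qed.

Lemma cos_sym n k p : (0 < n)%N -> (k <= n)%N -> cos (tt' n (n - k) p) = cos (tt' n k p).
Proof. by move=> n0 kn; rewrite t_shift // (periodicn (@cosD2pi R)) cosN. Qed.
Lemma sin_sym n k p : (0 < n)%N -> (k <= n)%N -> sin (tt' n (n - k) p) = - sin (tt' n k p).
Proof. by move=> n0 kn; rewrite t_shift // (periodicn (@sinD2pi R)) sinN. Qed.

Lemma vk_sym n (u : pnc R n) k : (0 < n)%N -> (k <= n)%N -> vk u (n - k) = vk u k.
Proof. by move=> n0 kn; apply: eq_bigr => q _; rewrite -/(tt' n _ q) cos_sym. Qed.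
Lemma vtk_sym n (u : pnc R n) k : (0 < n)%N -> (k <= n)%N -> vtk u (n - k) = - vtk u k.
Proof.
move=> n0 kn; rewrite /vtk -sumrN; apply: eq_bigr => q _.
by rewrite -/(tt' n _ q) sin_sym // mulrN.
Qed.

Lemma t0 n p : tt' n 0 p = 0.
Proof. by rewrite /tt' mulr0 !mul0r. Qed.
Lemma vk0 n (u : pnc R n) : vk u 0 = vplus u.
Proof. by apply: eq_bigr => q _; rewrite -/(tt' n 0 q) t0 cos0 mulr1. Qed.
Lemma vtk0 n (u : pnc R n) : vtk u 0 = 0.
Proof. by rewrite /vtk big1 // => q _; rewrite -/(tt' n 0 q) t0 sin0 mulr0. Qed.

Lemma t_half h p : (0 < h)%N -> tt' h.*2 h p = pi *+ p.
Proof.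
move=> h0; rewrite /tt' -muln2 natrM -[pi *+ p]mulr_natr.
have nz : (h%:R : R) != 0 by rewrite pnatr_eq0 -lt0n.
by field.
Qed.
Lemma cos_half h p : (0 < h)%N -> cos (tt' h.*2 h p) = (-1) ^+ p.
Proof.
move=> h0; rewrite t_half // -[pi *+ p]add0r (alternatingn (@cosDpi R)) cos0 mulr1.
by [].
Qed.
Lemma sin_half h p : (0 < h)%N -> sin (tt' h.*2 h p) = 0.
Proof.
by move=> h0; rewrite t_half // -[pi *+ p]add0r (alternatingn (@sinDpi R)) sin0 mulr0.
Qed.
End Final.

Section Final2.
Variable R : realType.

Lemma final_even n (u : pnc R n) (p : 'I_n) (F1 F2 : R -> R -> R) h :
  n = h.*2 -> (0 < h)%N ->
  (forall a b, F1 a (- b) = F1 a b) -> (forall a b, F2 a (- b) = - F2 a b) ->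
  n%:R^-1 * \sum_(k < n) (cos (tt' R n k p) * F1 (vk u k) (vtk u k)
                         + sin (tt' R n k p) * F2 (vk u k) (vtk u k))
  = n%:R^-1 * F1 (vplus u) 0 + (-1) ^+ p / n%:R * F1 (vminus u) 0
    + \sum_(1 <= k < h) (2 / n%:R * cos (tt' R n k p) * F1 (vk u k) (vtk u k)
                         + 2 / n%:R * sin (tt' R n k p) * F2 (vk u k) (vtk u k)).
Proof.
move=> hn h0 F1s F2s.
set G := fun k => cos (tt' R n k p) * F1 (vk u k) (vtk u k)
                + sin (tt' R n k p) * F2 (vk u k) (vtk u k).
have n0 : (0 < n)%N by rewrite hn double_gt0.
have sym : forall k, (0 < k < h.*2)%N -> G (h.*2 - k)%N = G k.
  move=> k /andP[_ kh]; rewrite -hn in kh *.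
  by rewrite /G cos_sym ?sin_sym ?vk_sym ?vtk_sym ?(ltnW kh) // F1s F2s; ring.
have := @pair_even R G h h0 sym; rewrite -hn => ->.
have thc : forall q : nat, cos (tt' R n h q) = (-1) ^+ q by move=> q; rewrite hn cos_half.
have ths : forall q : nat, sin (tt' R n h q) = 0 by move=> q; rewrite hn sin_half.
have vh : vk u h = vminus u.
  by apply: eq_bigr => q _; rewrite -/(tt' R n _ q) thc mulrC.
have vth : vtk u h = 0.
  by rewrite /vtk big1 // => q _; rewrite -/(tt' R n _ q) ths mulr0.
have -> : \sum_(1 <= k < h) (2 / n%:R * cos (tt' R n k p) * F1 (vk u k) (vtk u k)
                         + 2 / n%:R * sin (tt' R n k p) * F2 (vk u k) (vtk u k))
   = 2 / n%:R * \sum_(1 <= k < h) G k.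
  by rewrite mulr_sumr; apply: eq_bigr => k _; rewrite /G; ring.
rewrite /G t0 cos0 sin0 vk0 vtk0 thc ths vh vth; ring.
Qed.

Lemma final_odd n (u : pnc R n) (p : 'I_n) (F1 F2 : R -> R -> R) h :
  n = h.*2.+1 ->
  (forall a b, F1 a (- b) = F1 a b) -> (forall a b, F2 a (- b) = - F2 a b) ->
  n%:R^-1 * \sum_(k < n) (cos (tt' R n k p) * F1 (vk u k) (vtk u k)
                         + sin (tt' R n k p) * F2 (vk u k) (vtk u k))
  = n%:R^-1 * F1 (vplus u) 0
    + \sum_(1 <= k < h.+1) (2 / n%:R * cos (tt' R n k p) * F1 (vk u k) (vtk u k)
                         + 2 / n%:R * sin (tt' R n k p) * F2 (vk u k) (vtk u k)).
Proof.
move=> hn F1s F2s.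
set G := fun k => cos (tt' R n k p) * F1 (vk u k) (vtk u k)
                + sin (tt' R n k p) * F2 (vk u k) (vtk u k).
have n0 : (0 < n)%N by rewrite hn.
have sym : forall k, (0 < k < h.*2.+1)%N -> G (h.*2.+1 - k)%N = G k.
  move=> k /andP[_ kh]; rewrite -hn in kh *.
  by rewrite /G cos_sym ?sin_sym ?vk_sym ?vtk_sym ?(ltnW kh) // F1s F2s; ring.
have := @pair_odd R G h sym; rewrite -hn => ->.
have -> : \sum_(1 <= k < h.+1) (2 / n%:R * cos (tt' R n k p) * F1 (vk u k) (vtk u k)
                         + 2 / n%:R * sin (tt' R n k p) * F2 (vk u k) (vtk u k))
   = 2 / n%:R * \sum_(1 <= k < h.+1) G k.
  by rewrite mulr_sumr; apply: eq_bigr => k _; rewrite /G; ring.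
rewrite /G t0 cos0 sin0 vk0 vtk0; ring.
Qed.

Lemma phi_v n (u : pnc R n) k : phi u k = vk u k +i* vtk u k.
Proof.
apply: cE; rewrite ?Re_sum ?Im_sum /=; apply: eq_bigr => q _;
  by rewrite ?ReMr ?ImMr /wn -cw_defs.
Qed.
End Final2.

Section Conv.
Variable R : realType.

Lemma conv_cos n (u : pnc R n) (p : 'I_n) : (0 < n)%N ->
  (fun N => \sum_(0 <= j < N) pcos_term u j p) @ \oo -->
  n%:R^-1 * \sum_(k < n) (cos (tt' R n k p) * (cos (vk u k) * cosh (vtk u k))
                        + sin (tt' R n k p) * (- (sin (vk u k) * sinh (vtk u k)))).
Proof.
move=> n0.
have E : forall N, \sum_(0 <= j < N) pcos_term u j p =
  n%:R^-1 * \sum_(k < n) (cos (tt' R n k p) * cRe (ccosN (vk u k +i* vtk u k) N)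
                        + sin (tt' R n k p) * cIm (ccosN (vk u k +i* vtk u k) N)).
  move=> N.
  rewrite (@psum_eq R n u (fun j => (-1) ^+ j / ((2 * j)`!)%:R) (fun j => (2 * j)%N) p N n0).
  by congr (_ * _); apply: eq_bigr => k _; rewrite ang_defs /Ssum phi_v.
rewrite (funext E); apply: cvgMl_tmp.
apply: cvg_sumf => k; apply: cvgD; apply: cvgMl_tmp.
  exact: ccos_re_cvg.
exact: ccos_im_cvg.
Qed.

Lemma conv_sin n (u : pnc R n) (p : 'I_n) : (0 < n)%N ->
  (fun N => \sum_(0 <= j < N) psin_term u j p) @ \oo -->
  n%:R^-1 * \sum_(k < n) (cos (tt' R n k p) * (sin (vk u k) * cosh (vtk u k))
                        + sin (tt' R n k p) * (cos (vk u k) * sinh (vtk u k))).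
Proof.
move=> n0.
have E : forall N, \sum_(0 <= j < N) psin_term u j p =
  n%:R^-1 * \sum_(k < n) (cos (tt' R n k p) * cRe (csinN (vk u k +i* vtk u k) N)
                        + sin (tt' R n k p) * cIm (csinN (vk u k +i* vtk u k) N)).
  move=> N.
  rewrite (@psum_eq R n u (fun j => (-1) ^+ j / ((2 * j).+1`!)%:R) (fun j => (2 * j).+1%N) p N n0).
  by congr (_ * _); apply: eq_bigr => k _; rewrite ang_defs /Ssum phi_v.
rewrite (funext E); apply: cvgMl_tmp.
apply: cvg_sumf => k; apply: cvgD; apply: cvgMl_tmp.
  exact: csin_re_cvg.
exact: csin_im_cvg.
Qed.
End Conv.

Lemma cvg_eqr (R : realType) (f : nat -> R) (x y : R) : x = y -> f @ \oo --> x -> f @ \oo --> y.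
Proof. by move=> ->. Qed.

Local Close Scope complex_scope.
Local Close Scope classical_set_scope.

Theorem mainTheorem13 (R : realType) (n : nat) (u : pnc R n) :
  (2 <= n)%N ->
  (~~ odd n ->
     psums_to (pcos_term u)
       (fun p => eplus R n p * cos (vplus u) + eminus R n p * cos (vminus u)
          + \sum_(1 <= k < (n %/ 2).-1.+1)
              (ek R n k p * cos (vk u k) * cosh (vtk u k)
               - etk R n k p * sin (vk u k) * sinh (vtk u k))) /\
     psums_to (psin_term u)
       (fun p => eplus R n p * sin (vplus u) + eminus R n p * sin (vminus u)
          + \sum_(1 <= k < (n %/ 2).-1.+1)
              (ek R n k p * sin (vk u k) * cosh (vtk u k)
               + etk R n k p * cos (vk u k) * sinh (vtk u k)))) /\
  (odd n ->
     psums_to (pcos_term u)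
       (fun p => eplus R n p * cos (vplus u)
          + \sum_(1 <= k < (n.-1 %/ 2).+1)
              (ek R n k p * cos (vk u k) * cosh (vtk u k)
               - etk R n k p * sin (vk u k) * sinh (vtk u k))) /\
     psums_to (psin_term u)
       (fun p => eplus R n p * sin (vplus u)
          + \sum_(1 <= k < (n.-1 %/ 2).+1)
              (ek R n k p * sin (vk u k) * cosh (vtk u k)
               + etk R n k p * cos (vk u k) * sinh (vtk u k)))).
Proof.
move=> n2; have n0 : (0 < n)%N by apply: leq_trans n2.
have coshN : forall x : R, cosh (- x) = cosh x by move=> x; rewrite /cosh opprK addrC.
have sinhN : forall x : R, sinh (- x) = - sinh x by move=> x; rewrite /sinh opprK; ring.
have cosh0 : cosh (0 : R) = 1.
  by rewrite /cosh oppr0 expR0 -mulr2n divff // pnatr_eq0.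
have sinh0 : sinh (0 : R) = 0 by rewrite /sinh oppr0 subrr mul0r.
split.
- move=> ev; set h := (n %/ 2)%N.
  have hn : n = h.*2.
    by rewrite /h divn2; move: (odd_double_half n); rewrite (negbTE ev) add0n.
  have h0 : (0 < h)%N by rewrite /h divn_gt0.
  rewrite prednK //.
  split => p.
  + have := @conv_cos R n u p n0.
    rewrite (@final_even R n u p (fun a b => cos a * cosh b) (fun a b => - (sin a * sinh b)) h hn h0);
      last 2 first.
    * by move=> a b; rewrite coshN.
    * by move=> a b; rewrite sinhN mulrN.
    rewrite cosh0 => H; apply: (@cvg_eqr R _ _ _ _ H).
    rewrite /eplus /eminus; congr (_ + _ + _); [ring | ring | ].
    by apply: eq_bigr => k _; rewrite /ek /etk /tt'; ring.
  + have := @conv_sin R n u p n0.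
    rewrite (@final_even R n u p (fun a b => sin a * cosh b) (fun a b => cos a * sinh b) h hn h0);
      last 2 first.
    * by move=> a b; rewrite coshN.
    * by move=> a b; rewrite sinhN mulrN.
    rewrite cosh0 => H; apply: (@cvg_eqr R _ _ _ _ H).
    rewrite /eplus /eminus; congr (_ + _ + _); [ring | ring | ].
    by apply: eq_bigr => k _; rewrite /ek /etk /tt'; ring.
- move=> od; set h := (n.-1 %/ 2)%N.
  have e := odd_double_half n; rewrite od add1n in e.
  have hn : n = h.*2.+1 by rewrite /h divn2 -e /= doubleK.
  split => p.
  + have := @conv_cos R n u p n0.
    rewrite (@final_odd R n u p (fun a b => cos a * cosh b) (fun a b => - (sin a * sinh b)) h hn);
      last 2 first.
    * by move=> a b; rewrite coshN.
    * by move=> a b; rewrite sinhN mulrN.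
    rewrite cosh0 => H; apply: (@cvg_eqr R _ _ _ _ H).
    rewrite /eplus; congr (_ + _); [ring | ].
    by apply: eq_bigr => k _; rewrite /ek /etk /tt'; ring.
  + have := @conv_sin R n u p n0.
    rewrite (@final_odd R n u p (fun a b => sin a * cosh b) (fun a b => cos a * sinh b) h hn);
      last 2 first.
    * by move=> a b; rewrite coshN.
    * by move=> a b; rewrite sinhN mulrN.
    rewrite cosh0 => H; apply: (@cvg_eqr R _ _ _ _ H).
    rewrite /eplus; congr (_ + _); [ring | ].
    by apply: eq_bigr => k _; rewrite /ek /etk /tt'; ring.
Qed.
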